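(* Let $A=\mathbb{F}_q[t]$ and let $f_1,\ldots,f_r,g\in A$ be non-constant. The number of polynomial functions from $A/f_1A\times\cdots\times A/f_rA$ to $A/gA$ is $$N(f_1,\ldots,f_r;g)=\prod_{\mathbf{k}}q^{\deg\frac{g}{\gcd\left(g,\prod_{i=1}^r\prod_{j=0}^{k_i-1}(a_{k_i}-a_j)\right)}},$$ where the product is over all $\mathbf{k}=(k_1,\ldots,k_r)\in\mathbb{N}^r$ with $0\le k_i<\mu(f_i,g)$ for each $1\le i\le r$.
   Context: Write $\mathbb{F}_q=\{a_0=0,a_1,\ldots,a_{q-1}\}$. For $k\in\mathbb{N}$ with base-$q$ expansion $k=c_0+c_1q+\cdots+c_hq^h$ ($0\le c_s<q$), define $a_k=a_{c_0}+a_{c_1}t+\cdots+a_{c_h}t^h\in A$. Thus $\{a_0,\ldots,a_{q^d-1}\}$ is the set of polynomials of degree $<d$. For each $i$, $A/f_iA$ is identified with the complete residue system of polynomials of degree $<\deg f_i$. A function $f$ from $A/f_1A\times\cdots\times A/f_rA$ to $A/gA$ is a polynomial function if there is $F\in A[x_1,\ldots,x_r]$ with $F(b_1,\ldots,b_r)\equiv f(b_1,\ldots,b_r)\pmod g$ for all $(b_1,\ldots,b_r)$ with $\deg b_i<\deg f_i$ for each $i$. $\lambda(g)$ is the smallest positive integer $k$ such that $g\mid\prod_{j=0}^{k-1}(a_k-a_j)$, and $\mu(f_i,g)=\min(q^{\deg f_i},\lambda(g))$. *)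

(* Defs.v *)
(* A = F_q[t] is {poly F} for F : finFieldType, q = #|F|. *)
From HB Require Import structures.
From mathcomp Require Import all_boot all_order all_algebra.
Set Implicit Arguments. Unset Strict Implicit. Unset Printing Implicit Defensive.
Import Order.TTheory GRing.Theory Num.Theory.
Local Open Scope ring_scope.

Section Defs.
Variable F : finFieldType.
Local Notation q := #|F|.

(* An enumeration a_0 = 0, a_1, ..., a_{q-1} of F_q, given as a sequence s. *)
Definition good_enum (s : seq F) : Prop :=
  [/\ size s = q, uniq s & s`_0 = 0].

(* a_k = sum_i a_{c_i} t^i where k = sum_i c_i q^i (base-q digits).
   Since k < q^(k+1), digits beyond index k are 0 and a_0 = 0. *)
Definition aq (s : seq F) (k : nat) : {poly F} :=
  \sum_(i < k.+1) (s`_((k %/ q ^ i) %% q))%:P * 'X^i.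

Definition fallprod (s : seq F) (k : nat) : {poly F} :=
  \prod_(j < k) (aq s k - aq s j).

Definition lam_prop (s : seq F) (g : {poly F}) (k : nat) : bool :=
  (0 < k)%N && (g %| fallprod s k).

(* lambda(g): the smallest positive k with g | prod_{j<k}(a_k - a_j).
   Such k exists and is <= q^(deg g) (take k = q^(deg g), a_k = t^(deg g));
   we search in 1 .. q^(size g), which contains it. *)
Definition lambda (s : seq F) (g : {poly F}) : nat :=
  (find (lam_prop s g) (iota 1 (q ^ size g))).+1.

Definition mu (s : seq F) (f g : {poly F}) : nat :=
  minn (q ^ (size f).-1) (lambda s g).

(* Multivariate polynomials in A[x_1..x_r], as finite lists of monomials
   (exponent vector, coefficient in A), and their evaluation. *)
Definition mpoly (r : nat) := seq ({ffun 'I_r -> nat} * {poly F}).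

Definition meval (r : nat) (P : mpoly r) (b : 'I_r -> {poly F}) : {poly F} :=
  \sum_(m <- P) m.2 * \prod_(i < r) b i ^+ m.1 i.

(* Points of A/f_1A x ... x A/f_rA: r-tuples of residues b_i with deg b_i < deg f_i,
   each b_i stored by its coefficient vector of a common length mx. *)
Definition mx (r : nat) (f : 'I_r -> {poly F}) : nat := \max_(i < r) size (f i).

Definition in_dom (r : nat) (f : 'I_r -> {poly F}) (b : {ffun 'I_r -> (mx f).-tuple F}) : bool :=
  [forall i, (size (Poly (b i)) < size (f i))%N].

Definition Dom (r : nat) (f : 'I_r -> {poly F}) := {b | @in_dom r f b}.

Definition dpt (r : nat) (f : 'I_r -> {poly F}) (x : Dom f) : 'I_r -> {poly F} :=
  fun i => Poly (val x i).

(* Elements of A/gA: residues of degree < deg g, by their coefficient vectors. *)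
Definition Cod (g : {poly F}) := ((size g).-1).-tuple F.

Definition FunT (r : nat) (f : 'I_r -> {poly F}) (g : {poly F}) :=
  {ffun Dom f -> Cod g}.

Definition is_polyfun (r : nat) (f : 'I_r -> {poly F}) (g : {poly F})
  (h : FunT f g) : Prop :=
  exists P : mpoly r, forall x : Dom f, Poly (h x) = meval P (dpt x) %% g.

End Defs.

Definition card_is (T : eqType) (P : T -> Prop) (n : nat) : Prop :=
  exists s : seq T, [/\ uniq s, (forall x, x \in s <-> P x) & size s = n].

(* Main.v *)
Require Import Defs.
From HB Require Import structures.
From mathcomp Require Import all_boot all_order all_algebra.
From mathcomp Require Import ring.
From Stdlib Require Import Classical.
Import GRing.Theory.
Local Open Scope ring_scope.

Set Implicit Arguments. Unset Strict Implicit. Unset Printing Implicit Defensive.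


Section Digits.
Variable F : finFieldType.
Variable s : seq F.
Hypothesis hs : good_enum s.
Local Notation q := #|F|.
Local Notation a := (aq s).

Lemma q_gt1 : (1 < q)%N.
Proof.
rewrite (cardD1 (0 : F)) (cardD1 (1 : F)) !inE oner_neq0 /=; by [].
Qed.
Lemma q_gt0 : (0 < q)%N. Proof. exact: ltn_trans q_gt1. Qed.

Lemma s0 : s`_0 = 0. Proof. by case: hs. Qed.
Lemma size_s : size s = q. Proof. by case: hs. Qed.
Lemma uniq_s : uniq s. Proof. by case: hs. Qed.

Lemma mem_s (x : F) : x \in s.
Proof.
have [|_ e] := uniq_min_size uniq_s (fun y (_ : y \in s) => mem_enum F y).
  by rewrite -cardE size_s.
by rewrite e mem_enum.
Qed.

Lemma sum_widen (R : nmodType) (t : nat -> R) n m : (n <= m)%N ->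
  (forall i, (n <= i < m)%N -> t i = 0) ->
  \sum_(i < n) t i = \sum_(i < m) t i.
Proof.
move=> lenm h; rewrite -!(big_mkord xpredT) (big_cat_nat (leq0n n) lenm) /=.
rewrite [X in _ = _ + X]big_nat_cond [X in _ = _ + X]big1 ?addr0 // => i /andP[/h -> _] //.
Qed.

Lemma aq_wide N k : (k < q ^ N)%N ->
  a k = \sum_(i < N) (s`_((k %/ q ^ i) %% q))%:P * 'X^i.
Proof.
move=> hk; rewrite /aq.
have van i : (k < q ^ i)%N -> (s`_((k %/ q ^ i) %% q))%:P * 'X^i = 0 :> {poly F}.
  by move=> lt; rewrite divn_small // mod0n s0 mul0r.
have kk : (k < q ^ k.+1)%N.
  by apply: ltn_trans (ltnSn k) _; exact: ltn_expl q_gt1.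
have vi i : (maxn N k.+1 <= i)%N -> (k < q ^ i)%N.
  move=> hi; apply: (leq_trans kk); rewrite leq_pexp2l ?q_gt0 //.
  exact: leq_trans (leq_maxr _ _) hi.
pose tt i := (s`_((k %/ q ^ i) %% q))%:P * 'X^i : {poly F}.
rewrite (@sum_widen _ tt k.+1 (maxn N k.+1)) ?leq_maxr //; last first.
  move=> i /andP[hi _]; apply: van; apply: (leq_trans kk).
  by rewrite leq_pexp2l ?q_gt0.
rewrite (@sum_widen _ tt N (maxn N k.+1)) ?leq_maxl //.
move=> i /andP[hi _]; apply: van; apply: (leq_trans hk).
by rewrite leq_pexp2l ?q_gt0.
Qed.

Lemma aq0 : a 0 = 0.
Proof. by rewrite /aq big_ord1 div0n mod0n s0 mul0r. Qed.

Lemma aq_rec k : a k = (s`_(k %% q))%:P + 'X * a (k %/ q).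
Proof.
rewrite {1}/aq big_ord_recl expn0 divn1 expr0 mulr1; congr (_ + _).
rewrite (@aq_wide k (k %/ q)); last first.
  apply: (leq_ltn_trans (leq_div _ _)).
  by case: k => // k; apply: ltn_expl q_gt1.
rewrite mulr_sumr; apply: eq_bigr => i _.
rewrite /bump /= ?add1n expnS divnMA exprS.
by rewrite mulrCA.
Qed.

Lemma aq_block Q n R : (R < q ^ n)%N -> a (Q * q ^ n + R) = 'X^n * a Q + a R.
Proof.
elim: n R => [|n IH] R hR.
  by move: hR; rewrite expn0 ltnS leqn0 => /eqP ->; rewrite muln1 addn0 aq0 addr0 expr0 mul1r.
rewrite aq_rec [a R]aq_rec.
have e1 : ((Q * q ^ n.+1 + R) %% q = R %% q)%N.
  by rewrite expnSr mulnA modnMDl.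
have e2 : ((Q * q ^ n.+1 + R) %/ q = Q * q ^ n + R %/ q)%N.
  by rewrite expnSr mulnA divnMDl ?q_gt0.
rewrite e1 e2 IH; last by rewrite ltn_divLR ?q_gt0 // -expnSr.
by rewrite mulrDr addrCA exprS mulrA.
Qed.

Lemma aq_size n k : (k < q ^ n)%N -> (size (a k) <= n)%N.
Proof.
elim: n k => [|n IH] k hk.
  by move: hk; rewrite expn0 ltnS leqn0 => /eqP ->; rewrite aq0 size_poly0.
rewrite aq_rec; apply: (leq_trans (size_add _ _)); rewrite geq_max.
rewrite (leq_trans (size_polyC_leq1 _)) //=.
have hk' : (k %/ q < q ^ n)%N by rewrite ltn_divLR ?q_gt0 // -expnSr.
have [->|nz] := eqVneq (a (k %/ q)) 0; first by rewrite mulr0 size_poly0.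
by rewrite mulrC size_mulX // ltnS IH.
Qed.

Lemma aq_coef0 k : (a k)`_0 = s`_(k %% q).
Proof. by rewrite aq_rec coefD coefC coefXM /= addr0. Qed.

Lemma aq_inj : injective a.
Proof.
suff H : forall n k k', (k < n)%N -> (k' < n)%N -> a k = a k' -> k = k'.
  by move=> k k' e; apply: (H (maxn k k').+1) => //; rewrite ltnS ?leq_maxl ?leq_maxr.
elim=> [//|n IH] k k' hk hk' e.
have em : (k %% q = k' %% q)%N.
  have := aq_coef0 k; rewrite e aq_coef0 => /eqP.
  by rewrite nth_uniq ?size_s ?ltn_mod ?q_gt0 ?uniq_s // => /eqP.
have ed : a (k %/ q) = a (k' %/ q).
  move: e; rewrite (aq_rec k) (aq_rec k') em => /addrI.
  by move/mulfI; apply; rewrite polyX_eq0.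
have lt x : (x < n.+1)%N -> (0 < n)%N -> (x %/ q < n)%N.
  case: x => [|x] hx n0; first by rewrite div0n.
  exact: leq_trans (ltn_Pdiv q_gt1 (ltn0Sn _)) _.
case: (posnP n) => [n0|n0].
  by move: hk hk'; rewrite n0 !ltnS !leqn0 => /eqP-> /eqP->.
have dq : (k %/ q = k' %/ q)%N by apply: IH; rewrite ?lt.
by rewrite (divn_eq k q) (divn_eq k' q) dq em.
Qed.

Lemma aq_surj n (p : {poly F}) : (size p <= n)%N -> exists2 k, (k < q ^ n)%N & a k = p.
Proof.
elim: n p => [|n IH] p hp.
  by exists 0%N; rewrite ?expn0 // aq0; move: hp; rewrite leqn0 size_poly_eq0 => /eqP ->.
have ep : p = Poly (behead p) * 'X + (p`_0)%:P.
  apply/polyP=> i; rewrite coefD coefMX coefC coef_Poly.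
  by case: i => [|i] /=; rewrite ?addr0 ?add0r // nth_behead.
have hb : (size (Poly (behead p)) <= n)%N.
  by apply: (leq_trans (size_Poly _)); rewrite size_behead -subn1 leq_subLR add1n.
have [k' hk' ek'] := IH _ hb.
pose i := index p`_0 s.
have hi : (i < q)%N by rewrite -size_s index_mem mem_s.
exists (k' * q + i)%N.
  rewrite expnSr; apply: (leq_trans (n:= k'.+1 * q)).
    by rewrite mulSn [(q + _)%N]addnC ltn_add2l.
  by rewrite leq_mul2r hk' orbT.
rewrite aq_rec modnMDl modn_small // divnMDl ?q_gt0 // divn_small // addn0.
by rewrite ek' nth_index ?mem_s // mulrC addrC -ep.
Qed.

End Digits.


Section Val.
Variable F : fieldType.
Implicit Types p x y u w : {poly F}.

Definition pval p x : nat := (\sum_(1 <= e < size x) ((p ^+ e %| x)%R : nat))%N.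

Lemma count_le (v E : nat) : (v < E)%N -> (\sum_(1 <= e < E) (e <= v : nat))%N = v.
Proof.
move=> vE; rewrite (@big_cat_nat _ _ _ v.+1) //=.
rewrite [X in (_ + X)%N]big_nat_cond [X in (_ + X)%N]big1; last first.
  by move=> i /andP[/andP[hi _] _]; rewrite leqNgt hi.
rewrite addn0 big_nat_cond (eq_bigr (fun _ => 1%N)); last first.
  by move=> i /andP[/andP[_ hi] _]; rewrite -ltnS hi.
by rewrite -big_nat_cond sum_nat_const_nat subn1 muln1.
Qed.

Lemma size_pow_lt p y a : (1 < size p)%N -> y != 0 -> (a < size (p ^+ a * y)%R)%N.
Proof.
move=> sp y0; have p0 : p != 0 by rewrite -size_poly_eq0 -lt0n (ltn_trans _ sp).
have pa0 : p ^+ a != 0 := expf_neq0 _ p0.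
have sa : (a < size (p ^+ a)%R)%N.
  move: (pa0); rewrite -size_poly_gt0; move: (size_exp p a); case: (size (p ^+ a)) => // z /= -> _.
  by rewrite ltnS leq_pmull // -subn1 subn_gt0.
rewrite size_mul //; apply: leq_trans sa _.
by rewrite -subn1 -addnBA ?size_poly_gt0 // leq_addr.
Qed.

Lemma pval_spec p x a y : (1 < size p)%N -> x = p ^+ a * y -> ~~ (p %| y) ->
  (forall e, (p ^+ e %| x) = (e <= a)%N) /\ pval p x = a.
Proof.
move=> sp ex npy.
have p0 : p != 0 by rewrite -size_poly_eq0 -lt0n (ltn_trans _ sp).
have y0 : y != 0 by apply: contra npy => /eqP ->; rewrite dvdp0.
have he e : (p ^+ e %| x) = (e <= a)%N.
  case: (leqP e a) => hea; first by rewrite ex dvdp_mulr // dvdp_exp2l.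
  apply/negP; rewrite ex -(subnKC (ltnW hea)) exprD dvdp_mul2l ?expf_neq0 //.
  move=> h; move/negP: npy; apply; apply: (dvdp_trans _ h).
  by apply: dvdp_exp; rewrite ?subn_gt0 ?dvdpp.
split=> //; rewrite /pval (eq_bigr (fun e => (e <= a : nat))); last by move=> e _; rewrite he.
by apply: count_le; rewrite ex size_pow_lt.
Qed.

Lemma size_mul_gtl x p : x != 0 -> (1 < size p)%N -> (size x < size (x * p)%R)%N.
Proof.
move=> x0 sp; have p0 : p != 0 by rewrite -size_poly_eq0 -lt0n (ltn_trans _ sp).
rewrite size_mul // -subn1 -addnBA ?(ltnW sp) //.
by rewrite -[X in (X < _)%N]addn0 ltn_add2l subn_gt0.
Qed.

Lemma pval_exists p x : (1 < size p)%N -> x != 0 ->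
  exists a, exists2 y, x = p ^+ a * y & ~~ (p %| y).
Proof.
move=> sp; have p0 : p != 0 by rewrite -size_poly_eq0 -lt0n (ltn_trans _ sp).
elim: {x}(size x) {-2}x (leqnn (size x)) => [|n IH] x hx x0.
  by move: hx; rewrite leqn0 size_poly_eq0 (negPf x0).
have [px|npx] := boolP (p %| x); last by exists 0%N, x; rewrite ?expr0 ?mul1r.
have ex := divpK px; set x' := x %/ p in ex.
have x'0 : x' != 0 by apply: contra x0 => /eqP e; rewrite -ex e mul0r.
have [|a [y ey npy]] := IH x' _ x'0.
  by rewrite -ltnS; apply: leq_trans hx; rewrite -ex size_mul_gtl.
by exists a.+1, y; rewrite // -ex ey exprSr mulrAC.
Qed.

Lemma pval_dvd p x n : (1 < size p)%N -> x != 0 -> (p ^+ n %| x) = (n <= pval p x)%N.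
Proof.
move=> sp x0; have [a [y ey npy]] := pval_exists sp x0.
by have [h ->] := pval_spec sp ey npy.
Qed.

Lemma irr_size p : irreducible_poly p -> (1 < size p)%N.
Proof. by case. Qed.

Lemma irr_prime p x y : irreducible_poly p -> ~~ (p %| x) -> ~~ (p %| y) -> ~~ (p %| x * y).
Proof.
move=> ip nx ny; rewrite Gauss_dvdpr //.
by rewrite irreducible_poly_coprime.
Qed.

Lemma pvalM p x y : irreducible_poly p -> x != 0 -> y != 0 ->
  pval p (x * y) = (pval p x + pval p y)%N.
Proof.
move=> ip x0 y0; have sp := irr_size ip.
have [a [x' ex nx]] := pval_exists sp x0.
have [b [y' ey ny]] := pval_exists sp y0.
have [_ ->] := pval_spec sp ex nx; have [_ ->] := pval_spec sp ey ny.
have exy : x * y = p ^+ (a + b) * (x' * y').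
  by rewrite ex ey exprD mulrACA.
by have [_ ->] := pval_spec sp exy (irr_prime ip nx ny).
Qed.

Lemma pval1 p : pval p 1 = 0%N.
Proof. by rewrite /pval size_poly1 big_geq. Qed.

Lemma pval_prod p (I : eqType) (r : seq I) (G : I -> {poly F}) :
  irreducible_poly p -> (forall i, i \in r -> G i != 0) ->
  pval p (\prod_(i <- r) G i) = (\sum_(i <- r) pval p (G i))%N.
Proof.
move=> ip; elim: r => [|i r IH] h; first by rewrite !big_nil pval1.
have h' : forall j, j \in r -> G j != 0 by move=> j jr; apply: h; rewrite in_cons jr orbT.
rewrite !big_cons pvalM ?(IH h') ?h ?mem_head //.
by rewrite prodf_seq_neq0; apply/allP => j jr; exact: h'.
Qed.

Lemma pval_sum p x E : (1 < size p)%N -> x != 0 -> (size x <= E)%N ->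
  pval p x = (\sum_(1 <= e < E) ((p ^+ e %| x)%R : nat))%N.
Proof.
move=> sp x0 hE; rewrite (eq_bigr (fun e => (e <= pval p x : nat))); last first.
  by move=> e _; rewrite pval_dvd.
rewrite count_le //; apply: leq_trans hE.
have [a [y ey npy]] := pval_exists sp x0.
have [he ->] := pval_spec sp ey npy.
have y0 : y != 0 by apply: contra npy => /eqP ->; rewrite dvdp0.
by rewrite ey size_pow_lt.
Qed.

Lemma irr_div u : (1 < size u)%N -> exists2 p, irreducible_poly p & p %| u.
Proof.
elim: {u}(size u) {-2}u (leqnn (size u)) => [|n IH] u hu su.
  by move: hu; rewrite leqn0 => /eqP e; rewrite e in su.
case: (classic (irreducible_poly u)) => [iu|niu]; first by exists u.
have : ~ (forall q : {poly F}, size q != 1%N -> q %| u -> q %= u).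
  by move=> h; apply: niu; split.
move=> /not_all_ex_not [v] hv.
have [sv hv2] := imply_to_and _ _ hv.
have [vu nvu] := imply_to_and _ _ hv2.
have u0 : u != 0 by rewrite -size_poly_eq0 -lt0n (ltn_trans _ su).
have v0 : v != 0 by apply: contraTneq vu => ->; rewrite dvd0p.
have lvu := dvdp_leq u0 vu.
have svu : (size v < size u)%N.
  rewrite ltn_neqAle lvu andbT; apply/negP => /eqP e.
  by apply: nvu; rewrite -dvdp_size_eqp // e.
have svn : (size v <= n)%N by rewrite -ltnS (leq_trans svu).
have sv1 : (1 < size v)%N by rewrite ltn_neqAle eq_sym sv /= lt0n size_poly_eq0.
have [p ip pv] := IH v svn sv1.
by exists p => //; apply: dvdp_trans vu.
Qed.

Lemma dvd_crit u w : u != 0 -> w != 0 ->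
  (forall p, irreducible_poly p -> forall n, p ^+ n %| u -> p ^+ n %| w) -> u %| w.
Proof.
elim: {u}(size u) {-2}u (leqnn (size u)) w => [|n IH] u hu w u0 w0 h.
  by move: hu; rewrite leqn0 size_poly_eq0 (negPf u0).
case: (leqP (size u) 1) => su.
  have : size u == 1%N by rewrite eqn_leq su lt0n size_poly_eq0.
  by rewrite -dvdp1 => /dvdp_trans; apply; rewrite dvd1p.
have [p ip pu] := irr_div su.
have sp := irr_size ip; have p0 : p != 0 by rewrite -size_poly_eq0 -lt0n (ltn_trans _ sp).
have pw : p %| w by have := h p ip 1%N; rewrite expr1; apply.
have eu := divpK pu; have ew := divpK pw.
set u' := u %/ p in eu; set w' := w %/ p in ew.
have u'0 : u' != 0 by apply: contra u0 => /eqP e; rewrite -eu e mul0r.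
have w'0 : w' != 0 by apply: contra w0 => /eqP e; rewrite -ew e mul0r.
rewrite -eu -ew dvdp_mul2r //; apply: IH => //.
  by rewrite -ltnS; apply: leq_trans hu; rewrite -eu size_mul_gtl.
move=> r ir k rk.
have [crp|ncrp] := boolP (coprimep r p).
  have : r ^+ k %| w by apply: h => //; rewrite -eu dvdp_mulr.
  by rewrite -ew Gauss_dvdpl // coprimep_expl.
have rp : r %| p by move: ncrp; rewrite irreducible_poly_coprime // negbK.
have erp : r %= p by apply: apply_irredp => //; rewrite neq_ltn (irr_size ir) orbT.
have r0 : r != 0 by rewrite -size_poly_eq0 -lt0n (ltn_trans _ (irr_size ir)).
have : r ^+ k.+1 %| w.
  apply: h => //; rewrite -eu exprSr -(eqp_dvdr _ (eqp_mull u' erp)).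
  by rewrite dvdp_mul2r.
by rewrite -ew exprSr -(eqp_dvdr _ (eqp_mull w' erp)) dvdp_mul2r.
Qed.

End Val.


Lemma block_sum (t : nat -> nat) Q N :
  (\sum_(j < Q * N) t j = \sum_(Q' < Q) \sum_(R < N) t (Q' * N + R))%N.
Proof.
elim: Q => [|Q IH]; first by rewrite mul0n !big_ord0.
rewrite mulSnr big_split_ord /= IH big_ord_recr /=; congr (_ + _)%N.
Qed.

Lemma sum_le1 N (P : nat -> bool) :
  (forall i j, (i < N)%N -> (j < N)%N -> P i -> P j -> i = j) ->
  (\sum_(i < N) (P i : nat) <= 1)%N.
Proof.
move=> h; case: (pickP (fun i : 'I_N => P i)) => [i0 Pi0|none]; last first.
  by rewrite big1 // => i _; rewrite (negPf (negbT (none i))).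
rewrite (bigD1 i0) //= Pi0 big1 // => i ni; apply/eqP; rewrite eqb0.
apply/negP => Pi; move/eqP: ni; apply; apply: val_inj => /=.
by apply: h.
Qed.

Lemma sum_ge1 N (P : nat -> bool) i0 : (i0 < N)%N -> P i0 -> (1 <= \sum_(i < N) (P i : nat))%N.
Proof.
move=> hi Pi; rewrite (bigD1 (Ordinal hi)) //= Pi; exact: leq_addr.
Qed.

Lemma sum_eq_bound (t : nat -> nat) k K : k = K -> (\sum_(j < k) t j = \sum_(j < K) t j)%N.
Proof. by move=> ->. Qed.

Lemma sum_mono (t : nat -> nat) n m : (n <= m)%N -> (\sum_(i < n) t i <= \sum_(i < m) t i)%N.
Proof.
move=> lenm; rewrite -!(big_mkord xpredT) (big_cat_nat (leq0n n) lenm) /=; exact: leq_addr.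
Qed.

Section Count.
Variable F : finFieldType.
Variable s : seq F.
Hypothesis hs : good_enum s.
Local Notation q := #|F|.
Local Notation a := (aq s).

Definition ff n (x : {poly F}) := \prod_(j < n) (x - a j).

Lemma fallprodE k : fallprod s k = ff k (a k). Proof. by []. Qed.

Lemma diff_small (m : {poly F}) R1 R2 : m != 0 -> (R1 < q ^ (size m).-1)%N ->
  (R2 < q ^ (size m).-1)%N -> m %| a R1 - a R2 -> R1 = R2.
Proof.
move=> m0 h1 h2 hd; apply: (aq_inj hs); apply: subr0_eq; apply/eqP.
apply: contraT => nz; have := dvdp_leq nz hd.
have : (size (a R1 - a R2)%R <= (size m).-1)%N.
  apply: (leq_trans (size_add _ _)); rewrite size_polyN geq_max.
  by rewrite !(aq_size hs).
move=> l1 l2; have := leq_trans l2 l1.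
by rewrite -subn1 leq_subRL ?size_poly_gt0 // addnC addn1 ltnn.
Qed.

Lemma size_mod_le (c m : {poly F}) : m != 0 -> (size (c %% m)%R <= (size m).-1)%N.
Proof.
move=> m0; rewrite -ltnS prednK ?size_poly_gt0 //; by rewrite ltn_modp.
Qed.

Lemma count_lb (m b : {poly F}) k : m != 0 ->
  (k %/ q ^ (size m).-1 <= \sum_(j < k) ((m %| b - a j)%R : nat))%N.
Proof.
move=> m0; set n := (size m).-1; set N := (q ^ n)%N; set Q := (k %/ N)%N.
apply: (@leq_trans (\sum_(j < Q * N) ((m %| b - a j)%R : nat))); last first.
  exact: (@sum_mono (fun j => ((m %| b - a j)%R : nat)) _ _ (leq_trunc_div k N)).
rewrite (block_sum (fun j => ((m %| b - a j)%R : nat))).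
apply: (@leq_trans (\sum_(Q' < Q) 1)%N); first by rewrite sum_nat_const card_ord muln1.
apply: leq_sum => Q' _.
set c := b - 'X^n * a Q'.
have [R0 hR0 eR0] := aq_surj hs (size_mod_le c m0).
apply: (@sum_ge1 N (fun R => (m %| b - a (Q' * N + R))%R) _ hR0) => /=; rewrite aq_block // eR0.
have -> : b - ('X^n * a Q' + c %% m) = c - c %% m.
  by rewrite /c opprD addrA.
by rewrite {1}(divp_eq c m) addrK dvdp_mull.
Qed.

Lemma count_ub (m : {poly F}) k : m != 0 ->
  (\sum_(j < k) ((m %| a k - a j)%R : nat) <= k %/ q ^ (size m).-1)%N.
Proof.
move=> m0; set n := (size m).-1; set N := (q ^ n)%N; set Q := (k %/ N)%N.
set R0 := (k %% N)%N.
have N0 : (0 < N)%N by rewrite expn_gt0 (q_gt0 F).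
have hR0 : (R0 < N)%N by rewrite ltn_mod.
have ek : k = (Q * N + R0)%N by rewrite /Q /R0 -divn_eq.
have ak : a k = 'X^n * a Q + a R0 by rewrite {1}ek aq_block.
rewrite ak (sum_eq_bound (fun j => ((m %| 'X^n * a Q + a R0 - a j)%R : nat)) ek) big_split_ord /=.
rewrite [X in (_ + X)%N]big1 ?addn0; last first.
  move=> R _; apply/eqP; rewrite eqb0; apply/negP.
  rewrite aq_block ?(ltn_trans (ltn_ord R)) //.
  have -> : 'X^n * a Q + a R0 - ('X^n * a Q + a R) = a R0 - a R by ring.
  move/(diff_small m0 hR0 (ltn_trans (ltn_ord R) hR0)) => e.
  by move: (ltn_ord R); rewrite -e ltnn.
rewrite (block_sum (fun j => ((m %| 'X^n * a Q + a R0 - a j)%R : nat))).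
apply: (@leq_trans (\sum_(Q' < Q) 1)%N); last by rewrite sum_nat_const card_ord muln1.
apply: leq_sum => Q' _; apply: (@sum_le1 N (fun R => (m %| 'X^n * a Q + a R0 - a (Q' * N + R))%R)) => R1 R2 h1 h2 d1 d2.
have := dvdp_sub d1 d2.
rewrite !aq_block //.
have -> : 'X^n * a Q + a R0 - ('X^n * a Q' + a R1) - ('X^n * a Q + a R0 - ('X^n * a Q' + a R2))
  = a R2 - a R1 by ring.
by move/(diff_small m0 h2 h1).
Qed.

Lemma fac_le k (G : 'I_k -> {poly F}) j : \prod_(i < k) G i != 0 ->
  (size (G j) <= size (\prod_(i < k) G i)%R)%N.
Proof.
move=> nz; apply: dvdp_leq => //; rewrite (bigD1 j) //=; exact: dvdp_mulr (dvdpp _).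
Qed.

Lemma ff_dvd k b : fallprod s k %| ff k b.
Proof.
have [->|P0] := eqVneq (ff k b) 0; first exact: dvdp0.
have d0 : fallprod s k != 0.
  apply/prodf_neq0 => j _; rewrite subr_eq0; apply/eqP => /(aq_inj hs) e.
  by move: (ltn_ord j); rewrite -e ltnn.
apply: dvd_crit => // p ip n; have sp := irr_size ip.
rewrite !pval_dvd // => hn; apply: leq_trans hn _.
have nzd : forall j : 'I_k, j \in index_enum 'I_k -> a k - a j != 0.
  move=> j _; rewrite subr_eq0; apply/eqP => /(aq_inj hs) e.
  by move: (ltn_ord j); rewrite -e ltnn.
have nzP : forall j : 'I_k, j \in index_enum 'I_k -> b - a j != 0.
  by move=> j _; move/prodf_neq0: P0; apply.
rewrite /fallprod /ff !pval_prod //.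
set E := (size (fallprod s k) + size (ff k b))%N.
rewrite (eq_bigr (fun j : 'I_k => \sum_(1 <= e < E) ((p ^+ e %| a k - a j)%R : nat)))%N; last first.
  move=> j _; apply: pval_sum => //; first by apply: nzd; rewrite mem_index_enum.
  by apply: leq_trans (leq_addr _ _); apply: fac_le.
rewrite [X in (_ <= X)%N](eq_bigr (fun j : 'I_k => \sum_(1 <= e < E) ((p ^+ e %| b - a j)%R : nat)))%N; last first.
  move=> j _; apply: pval_sum => //; first by apply: nzP; rewrite mem_index_enum.
  by apply: leq_trans (leq_addl _ _); apply: fac_le.
rewrite exchange_big [X in (_ <= X)%N]exchange_big /=.
apply: leq_sum => e _.
have pe0 : p ^+ e != 0 by rewrite expf_neq0 // -size_poly_eq0 -lt0n (ltn_trans _ sp).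
exact: leq_trans (count_ub k pe0) (count_lb b k pe0).
Qed.

Lemma ff_prefix m n x : (m <= n)%N -> ff m x %| ff n x.
Proof.
move=> lmn; rewrite /ff -!(big_mkord xpredT (fun j => x - a j)).
by rewrite (big_cat_nat (leq0n m) lmn) /= dvdp_mulr.
Qed.

Lemma lam_ok (g : {poly F}) : (1 < size g)%N ->
  (0 < lambda s g)%N /\ g %| fallprod s (lambda s g).
Proof.
move=> sg; have g0 : g != 0 by rewrite -size_poly_eq0 -lt0n (ltn_trans _ sg).
set n := (size g).-1; set k := (q ^ n)%N.
have k0 : (0 < k)%N by rewrite expn_gt0 (q_gt0 F).
have lk : lam_prop s g k.
  rewrite /lam_prop k0 /=.
  have [j hj ej] := aq_surj hs (size_mod_le (a k) g0).
  rewrite /fallprod (bigD1 (Ordinal hj)) //= dvdp_mulr // ej.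
  by rewrite {1}(divp_eq (a k) g) addrK dvdp_mull.
have hh : has (lam_prop s g) (iota 1 (q ^ size g)).
  apply/hasP; exists k => //; rewrite mem_iota k0 /= add1n ltnS.
  by rewrite leq_pexp2l ?(q_gt0 F) // leq_pred.
have hf : (find (lam_prop s g) (iota 1 (q ^ size g)) < q ^ size g)%N.
  by move: hh; rewrite has_find size_iota.
by have := nth_find 0%N hh; rewrite nth_iota //.
Qed.

Lemma vanish (fi g b : {poly F}) n : (1 < size g)%N -> (size b < size fi)%N ->
  (mu s fi g <= n)%N -> g %| ff n b.
Proof.
move=> sg sb; rewrite /mu geq_min => /orP[h|h].
  have sb' : (size b <= (size fi).-1)%N by rewrite -ltnS prednK // (leq_ltn_trans _ sb).
  have [j hj ej] := aq_surj hs sb'.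
  rewrite /ff (bigD1 (Ordinal (leq_trans hj h))) //= ej subrr mul0r; exact: dvdp0.
have [_ hl] := lam_ok sg.
apply: dvdp_trans hl _; apply: dvdp_trans (ff_dvd _ b) _; exact: ff_prefix.
Qed.

End Count.


Section Rep.
Variable F : fieldType.
Variable r : nat.
Local Notation P := {poly F}.

Definition EvalL (B : nat -> P -> P) (L : seq ({ffun 'I_r -> nat} * P)) (b : 'I_r -> P) : P :=
  \sum_(m <- L) m.2 * \prod_(i < r) B (m.1 i) (b i).

Definition Rep B (phi : ('I_r -> P) -> P) :=
  exists L, forall b, phi b = EvalL B L b.

Variable B : nat -> P -> P.
Variable al : nat -> P.
Hypothesis B0 : forall x, B 0 x = 1.
Hypothesis BS : forall n x, B n.+1 x = x * B n x - al n * B n x.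

Lemma Rep_ext phi psi : Rep B phi -> (forall b, phi b = psi b) -> Rep B psi.
Proof. by move=> [L hL] e; exists L => b; rewrite -e hL. Qed.

Lemma Rep_cst c : Rep B (fun _ => c).
Proof.
exists [:: ([ffun _ => 0%N], c)] => b; rewrite /EvalL big_cons big_nil addr0 /=.
by rewrite big1 ?mulr1 // => i _; rewrite ffunE B0.
Qed.

Lemma Rep_add phi psi : Rep B phi -> Rep B psi -> Rep B (fun b => phi b + psi b).
Proof.
by move=> [L1 h1] [L2 h2]; exists (L1 ++ L2) => b; rewrite h1 h2 /EvalL big_cat.
Qed.

Lemma Rep_scale c phi : Rep B phi -> Rep B (fun b => c * phi b).
Proof.
move=> [L h]; exists [seq (m.1, c * m.2) | m <- L] => b.
rewrite /EvalL big_map h /EvalL mulr_sumr; apply: eq_bigr => m _ /=; by rewrite mulrA.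
Qed.

Definition incr (i : 'I_r) (n : {ffun 'I_r -> nat}) : {ffun 'I_r -> nat} :=
  [ffun j => if j == i then (n j).+1 else n j].

Lemma Rep_mulx (i : 'I_r) phi : Rep B phi -> Rep B (fun b => b i * phi b).
Proof.
move=> [L h]; exists (flatten [seq [:: (incr i m.1, m.2); (m.1, al (m.1 i) * m.2)] | m <- L]) => b.
rewrite /EvalL big_flatten big_map h /EvalL mulr_sumr; apply: eq_bigr => m _ /=.
rewrite big_cons big_cons big_nil addr0 /=.
rewrite (bigD1 i) //= [\prod_(j < r) B (incr i m.1 j) (b j)](bigD1 i) //=.
rewrite ffunE eqxx BS.
have -> : \prod_(j < r | j != i) B (incr i m.1 j) (b j) = \prod_(j < r | j != i) B (m.1 j) (b j).
  by apply: eq_bigr => j /negPf ji; rewrite ffunE ji.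
ring.
Qed.

Lemma Rep_sum (I : eqType) (l : seq I) (Q : pred I) (phi : I -> ('I_r -> P) -> P) :
  (forall k, Rep B (phi k)) -> Rep B (fun b => \sum_(k <- l | Q k) phi k b).
Proof.
move=> h; elim: l => [|k l IH].
  by apply: Rep_ext (Rep_cst 0) _ => b; rewrite big_nil.
case: (boolP (Q k)) => Qk.
  by apply: Rep_ext (Rep_add (h k) IH) _ => b; rewrite big_cons Qk.
by apply: Rep_ext IH _ => b; rewrite big_cons (negPf Qk).
Qed.

Variable B2 : nat -> P -> P.
Variable al2 : nat -> P.
Hypothesis B20 : forall x, B2 0 x = 1.
Hypothesis B2S : forall n x, B2 n.+1 x = x * B2 n x - al2 n * B2 n x.

Lemma Rep_term (n : {ffun 'I_r -> nat}) c :
  Rep B (fun b => c * \prod_(i < r) B2 (n i) (b i)).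
Proof.
suff H : forall (l : seq 'I_r) c, Rep B (fun b => c * \prod_(i <- l) B2 (n i) (b i)).
  exact: H.
elim=> [|i l IH] c'.
  by apply: Rep_ext (Rep_cst c') _ => b; rewrite big_nil mulr1.
suff H : forall e c'', Rep B (fun b => c'' * (B2 e (b i) * \prod_(j <- l) B2 (n j) (b j))).
  by apply: Rep_ext (H (n i) c') _ => b; rewrite big_cons.
elim=> [|e IHe] c''.
  by apply: Rep_ext (IH c'') _ => b; rewrite B20 mul1r.
have h1 := Rep_mulx i (IHe c'').
have h2 := IHe (- (c'' * al2 e)).
have h3 := Rep_add h1 h2.
apply: (Rep_ext h3) => b /=.
rewrite B2S; ring.
Qed.

Lemma Rep_all L : Rep B (EvalL B2 L).
Proof.
have h := @Rep_sum _ L xpredT (fun m b => m.2 * \prod_(i < r) B2 (m.1 i) (b i)).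
have h' : Rep B (fun b => \sum_(k <- L | xpredT k) k.2 * \prod_(i < r) B2 (k.1 i) (b i)).
  by apply: h => m; apply: Rep_term.
by apply: (Rep_ext h').
Qed.

End Rep.


Section Main.
Variable F : finFieldType.
Variable s : seq F.
Hypothesis hs : good_enum s.
Variable r : nat.
Variable f : 'I_r -> {poly F}.
Variable g : {poly F}.
Hypothesis hf : forall i, (1 < size (f i))%N.
Hypothesis hg : (1 < size g)%N.
Local Notation q := #|F|.
Local Notation a := (aq s).
Local Notation M := (\max_(i < r) mu s (f i) g).
Local Notation K0 := {ffun 'I_r -> 'I_M}.
Local Notation P := {poly F}.

Definition valid (k : K0) : bool := [forall i, (k i < mu s (f i) g)%N].
Definition dk (k : K0) : P := \prod_(i < r) fallprod s (k i).
Definition gk (k : K0) : P := g %/ gcdp g (dk k).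
Definition Pi (n : 'I_r -> nat) (b : 'I_r -> P) : P := \prod_(i < r) ff s (n i) (b i).
Definition E (c : K0 -> P) (b : 'I_r -> P) : P :=
  \sum_(k : K0 | valid k) c k * Pi (fun i => k i) b.
Definition inDom (b : 'I_r -> P) := forall i, (size (b i) < size (f i))%N.

Lemma g0 : g != 0.
Proof. by rewrite -size_poly_eq0 -lt0n (ltn_trans _ hg). Qed.

Lemma gkE k : gk k * gcdp g (dk k) = g.
Proof. by rewrite divpK // dvdp_gcdl. Qed.

Lemma gk0 k : gk k != 0.
Proof. by apply: contra g0 => /eqP e; rewrite -(gkE k) e mul0r. Qed.

Lemma gk_size k : (size (gk k) <= size g)%N.
Proof. by apply: dvdp_leq g0 _; rewrite -(gkE k) dvdp_mulr. Qed.

Lemma dk_dvd k b : dk k %| Pi (fun i => k i) b.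
Proof.
apply: (big_ind2 (fun x y => x %| y)).
- exact: dvd1p.
- by move=> x1 x2 y1 y2; apply: dvdp_mul.
- by move=> i _; apply: ff_dvd.
Qed.

Lemma dvdp_sum_all (I : Type) (l : seq I) (Q : pred I) (G : I -> P) :
  (forall i, Q i -> g %| G i) -> g %| \sum_(i <- l | Q i) G i.
Proof.
move=> h; apply: (big_ind (fun x => g %| x)).
- exact: dvdp0.
- by move=> x y; apply: dvdp_add.
- exact: h.
Qed.

Lemma modp_eqP (x y : P) : g %| x - y -> x %% g = y %% g.
Proof.
move=> h; have := modp_eq0 h; rewrite modpD modpN => /eqP.
by rewrite subr_eq0 => /eqP.
Qed.

Lemma E_red c b : E c b %% g = E (fun k => c k %% gk k) b %% g.
Proof.
apply: modp_eqP; rewrite /E -sumrB; apply: dvdp_sum_all => k _.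
rewrite -mulrBl {1}(divp_eq (c k) (gk k)) addrK -mulrA.
apply: dvdp_mull; rewrite -{1}(gkE k); apply: dvdp_mul (dvdpp _) _.
exact: dvdp_trans (dvdp_gcdr _ _) (dk_dvd k b).
Qed.

Lemma mu_le_M i : (mu s (f i) g <= M)%N.
Proof. exact: (leq_bigmax i). Qed.

Definition vec (k : K0) : {ffun 'I_r -> nat} := [ffun i => nat_of_ord (k i)].
Definition cL (L : seq ({ffun 'I_r -> nat} * P)) (k : K0) : P :=
  \sum_(m <- L | m.1 == vec k) m.2.

Lemma vec_inj : injective vec.
Proof.
move=> k1 k2 e; apply/ffunP => i; apply: val_inj.
by have := congr1 (fun h : {ffun 'I_r -> nat} => h i) e; rewrite /= !ffunE.
Qed.

Lemma E0 b : E (fun _ => 0) b = 0.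
Proof. by rewrite /E big1 // => k _; rewrite mul0r. Qed.

Lemma ED c1 c2 b : E (fun k => c1 k + c2 k) b = E c1 b + E c2 b.
Proof. by rewrite /E -big_split; apply: eq_bigr => k _; rewrite mulrDl. Qed.

Lemma EB c1 c2 b : E (fun k => c1 k - c2 k) b = E c1 b - E c2 b.
Proof. by rewrite /E -sumrB; apply: eq_bigr => k _; rewrite mulrBl. Qed.

Lemma E_ext c1 c2 b : (forall k, valid k -> c1 k = c2 k) -> E c1 b = E c2 b.
Proof. by move=> h; apply: eq_bigr => k vk; rewrite h. Qed.

Lemma group L b : inDom b ->
  EvalL (ff s) L b %% g = E (cL L) b %% g.
Proof.
move=> hb; elim: L => [|m L IH].
  by rewrite /EvalL big_nil (E_ext (c2 := fun _ => 0)) ?E0 // => k _; rewrite /cL big_nil.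
rewrite /EvalL big_cons -/(EvalL _ L b) modpD IH.
rewrite [E (cL (m :: L)) b](E_ext (c2 := fun k => (if m.1 == vec k then m.2 else 0) + cL L k)); last first.
  by move=> k _; rewrite /cL big_cons; case: ifP => _; rewrite ?add0r.
rewrite ED modpD; congr (_ + _).
case: (boolP [forall i, (m.1 i < mu s (f i) g)%N]) => hv.
  move/forallP: hv => hv.
  pose k0 : K0 := [ffun i => Ordinal (leq_trans (hv i) (mu_le_M i))].
  have ek0 : vec k0 = m.1 by apply/ffunP => i; rewrite !ffunE.
  have vk0 : valid k0 by apply/forallP => i; rewrite ffunE /=.
  rewrite /E (bigD1 k0) //= -ek0 eqxx [X in _ = (_ + X) %% g]big1 ?addr0; last first.
    move=> k /andP[_ nk]; have [e|_] := eqVneq (vec k0) (vec k); [by rewrite (vec_inj e) eqxx in nk | by rewrite mul0r].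
  congr (_ %% _); congr (_ * _); rewrite /Pi; apply: eq_bigr => i _; by rewrite ffunE.
rewrite negb_forall in hv; have [i hi] := existsP hv; rewrite -leqNgt in hi.
rewrite [X in _ = X %% g](E_ext (c2 := fun _ => 0)); last first.
  move=> k vk; case: eqP => // e; move/forallP: vk => /(_ i).
  have := congr1 (fun h : {ffun 'I_r -> nat} => h i) e; rewrite /= ffunE => <-.
  by rewrite ltnNge hi.
rewrite E0 mod0p; apply: modp_eq0; apply: dvdp_mull.
rewrite (bigD1 i) //=; apply: dvdp_mulr; exact: (vanish hs hg (hb i) hi).
Qed.

Lemma sum_lt (k1 k2 : 'I_r -> nat) : (forall i, k1 i <= k2 i)%N -> (exists i, k1 i != k2 i) ->
  (\sum_(i < r) k1 i < \sum_(i < r) k2 i)%N.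
Proof.
move=> h [i ni]; rewrite (bigD1 i) //= [X in (_ < X)%N](bigD1 i) //=.
apply: leq_ltn_trans (_ : _ <= k1 i + \sum_(j < r | j != i) k2 j)%N _.
  by rewrite leq_add2l; apply: leq_sum => j _.
by rewrite ltn_add2r ltn_neqAle ni h.
Qed.

Lemma uniqE (d : K0 -> P) : (forall k, valid k -> (size (d k) < size (gk k))%N) ->
  (forall b, inDom b -> E d b %% g = 0) -> forall k, valid k -> d k = 0.
Proof.
move=> hsz hE.
suff H : forall n k, valid k -> (\sum_(i < r) (k i : nat) < n)%N -> d k = 0.
  by move=> k vk; apply: (H _ k vk (ltnSn _)).
elim=> [//|n IH] k vk hn.
set bk := fun i => a (k i).
have hbk : inDom bk.
  move=> i; rewrite /bk.
  have hki : (k i < q ^ (size (f i)).-1)%N.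
    move/forallP: vk => /(_ i) vi; apply: (leq_trans vi); exact: geq_minl.
  apply: (leq_ltn_trans (aq_size hs hki)).
  by rewrite prednK // (ltn_trans _ (hf i)).
have key : E d bk = d k * dk k.
  rewrite /E (bigD1 k) //= [X in _ + X]big1 ?addr0 //.
  move=> k' /andP[vk' nk'].
  case: (boolP [forall i, (k' i <= k i)%N]) => hle.
    have h2 : exists i, (k' i : nat) != k i.
      case: (boolP [exists i, (k' i : nat) != k i]) => [/existsP //|].
      rewrite negb_exists => /forallP e; move/eqP: nk'; case.
      apply/ffunP => i; apply: val_inj; apply/eqP; rewrite -[_ == _]negbK; exact: e i.
    have h1 : forall i, (k' i <= k i)%N by move/forallP: hle.
    have hlt := sum_lt h1 h2.
    rewrite (IH k' vk') ?mul0r //.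
    by apply: leq_trans hlt _; rewrite -ltnS.
  rewrite negb_forall in hle; have [i hi] := existsP hle; rewrite -ltnNge in hi.
  rewrite /Pi [\prod_(i0 < r) _](bigD1 i) //= /ff (bigD1 (Ordinal hi)) //= /bk.
  by rewrite subrr mul0r mul0r mulr0.
have := hE bk hbk; rewrite key => /modp_eq0P hd.
apply/eqP; apply: contraT => nz.
suff : (size (gk k) <= size (d k))%N by rewrite leqNgt hsz.
apply: dvdp_leq nz _.
set h := gcdp g (dk k).
have h0 : h != 0 by rewrite gcdp_eq0 negb_and g0.
have hdk := divpK (dvdp_gcdr g (dk k)); rewrite -/h in hdk.
rewrite -(@Gauss_dvdpl _ _ (dk k %/ h)); last by apply: coprimep_div_gcd; rewrite g0.
by rewrite -(dvdp_mul2r _ _ h0) -mulrA hdk gkE.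
Qed.


Lemma E_bext c b1 b2 : (forall i, b1 i = b2 i) -> E c b1 = E c b2.
Proof.
move=> h; apply: eq_bigr => k _; congr (_ * _); apply: eq_bigr => i _; by rewrite h.
Qed.

Local Notation N := (size g).-1.

Definition totup n (p : P) : n.-tuple F := [tuple p`_j | j < n].

Lemma Poly_totup n (p : P) : (size p <= n)%N -> Poly (totup n p) = p.
Proof.
move=> hp; apply/polyP => i; rewrite coef_Poly.
case: (ltnP i n) => hi.
  by have -> : i = Ordinal hi by []; rewrite nth_mktuple.
by rewrite nth_default ?size_tuple //; apply/esym; move/leq_sizeP: hp; apply.
Qed.

Lemma Poly_tuple_inj n (t1 t2 : n.-tuple F) : Poly t1 = Poly t2 -> t1 = t2.
Proof.
move=> e; apply: eq_from_tnth => j; rewrite !(tnth_nth 0).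
by have := congr1 (fun p : P => p`_j) e; rewrite !coef_Poly.
Qed.

Lemma dpt_inDom (x : Dom f) : inDom (dpt x).
Proof. by move=> i; have /forallP := valP x; apply. Qed.

Lemma mkDom b : inDom b -> exists x : Dom f, forall i, dpt x i = b i.
Proof.
move=> hb.
have hs' : forall i, (size (b i) <= mx f)%N.
  move=> i; apply: ltnW; apply: (leq_trans (hb i)); exact: (leq_bigmax i).
have hd : @in_dom F r f [ffun i => totup (mx f) (b i)].
  by apply/forallP => i; rewrite ffunE Poly_totup.
exists (exist (fun b => @in_dom F r f b) _ hd) => i; by rewrite /dpt /= ffunE Poly_totup.
Qed.

Definition Phi (c : K0 -> P) : FunT f g := [ffun x => totup N (E c (dpt x) %% g)].

Lemma Poly_Phi c x : Poly (Phi c x) = E c (dpt x) %% g.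
Proof.
rewrite ffunE Poly_totup // -ltnS prednK ?ltn_modp ?g0 //.
exact: ltn_trans hg.
Qed.

Lemma Phi_ext c1 c2 : (forall k, valid k -> c1 k = c2 k) -> Phi c1 = Phi c2.
Proof. by move=> h; apply/ffunP => x; rewrite !ffunE (E_ext _ h). Qed.

Lemma mon0 (x : P) : x ^+ 0 = 1. Proof. exact: expr0. Qed.
Lemma monS n (x : P) : x ^+ n.+1 = x * x ^+ n - 0 * x ^+ n.
Proof. by rewrite mul0r subr0 exprS. Qed.
Lemma ff0 (x : P) : ff s 0 x = 1. Proof. by rewrite /ff big_ord0. Qed.
Lemma ffS n (x : P) : ff s n.+1 x = x * ff s n x - a n * ff s n x.
Proof. by rewrite /ff big_ord_recr /=; ring. Qed.

Lemma Phi_polyfun c : is_polyfun (Phi c).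
Proof.
have hR : Rep (fun n (x : P) => x ^+ n) (E c).
  rewrite /E.
  have := @Rep_sum F r (fun n (x : P) => x ^+ n) mon0 _ (index_enum K0) valid
     (fun k b => c k * Pi (fun i => k i) b).
  apply => k.
  apply: Rep_ext (@Rep_term F r (fun n (x : P) => x ^+ n) (fun _ => 0) mon0 monS (ff s) a ff0 ffS (vec k) (c k)) _.
  by move=> b; congr (_ * _); apply: eq_bigr => i _; rewrite ffunE.
have [L hL] := hR; exists L => x; rewrite Poly_Phi hL //.
Qed.

Lemma polyfun_Phi h : is_polyfun h ->
  exists2 c : K0 -> P, (forall k, (size (c k) < size (gk k))%N) & h = Phi c.
Proof.
move=> [Q hQ].
have [L hL] := @Rep_all F r (ff s) a ff0 ffS (fun n (x : P) => x ^+ n) (fun _ => 0) mon0 monS Q.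
exists (fun k => cL L k %% gk k) => [k|]; first by rewrite ltn_modp gk0.
apply/ffunP => x; apply: Poly_tuple_inj.
rewrite Poly_Phi hQ -E_red -group ?dpt_inDom //.
  by rewrite /meval -hL.
exact: dpt_inDom.
Qed.

Lemma Phi_inj (c1 c2 : K0 -> P) : (forall k, valid k -> (size (c1 k) < size (gk k))%N) ->
  (forall k, valid k -> (size (c2 k) < size (gk k))%N) ->
  Phi c1 = Phi c2 -> forall k, valid k -> c1 k = c2 k.
Proof.
move=> h1 h2 e k vk; apply/eqP; rewrite -subr_eq0; apply/eqP.
apply: (@uniqE (fun k => c1 k - c2 k)) vk.
  move=> k' vk'; apply: leq_ltn_trans (size_add _ _) _.
  by rewrite size_polyN gtn_max h1 ?h2.
move=> b hb; have [x hx] := mkDom hb.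
rewrite (@E_bext _ b (dpt x)) // EB modpD modpN.
by rewrite -!Poly_Phi e subrr.
Qed.

Local Notation C := {ffun (K0 * 'I_N) -> F}.
Definition Dset : {set K0 * 'I_N} :=
  [set kj : K0 * 'I_N | valid kj.1 && (kj.2 < (size (gk kj.1)).-1)%N].
Definition cp (c : C) (k : K0) : P := \sum_(j < N) (c (k, j))%:P * 'X^j.

Lemma coef_cp c k (j : 'I_N) : (cp c k)`_j = c (k, j).
Proof.
rewrite /cp coef_sum (bigD1 j) //= coefCM coefXn eqxx mulr1 [X in _ + X]big1 ?addr0 //.
move=> i ni; rewrite coefCM coefXn; case: eqP => [e|]; last by rewrite mulr0.
by move/eqP: ni; case; apply: val_inj.
Qed.

Lemma coef_cp_ge c k j : (N <= j)%N -> (cp c k)`_j = 0.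
Proof.
move=> hj; rewrite /cp coef_sum [X in X = _]big1 // => i _; rewrite coefCM coefXn.
case: eqP => [e|]; last by rewrite mulr0.
by move: (ltn_ord i); rewrite -e ltnNge hj.
Qed.

Lemma supp (c : C) kj : c \in pffun_on 0 Dset predT -> kj \notin Dset -> c kj = 0.
Proof.
case/pffun_onP => /subsetP h _ nD; apply/eqP; apply: contraR nD => nz.
by apply: h; rewrite inE.
Qed.

Lemma nk_lt k : ((size (gk k)).-1 < size (gk k))%N.
Proof. by rewrite prednK // size_poly_gt0 gk0. Qed.

Lemma cp_red (c : C) k : c \in pffun_on 0 Dset predT -> valid k -> (size (cp c k) < size (gk k))%N.
Proof.
move=> hc vk; apply: leq_ltn_trans (nk_lt k); apply/leq_sizeP => j hj.
case: (ltnP j N) => hjN; last exact: coef_cp_ge.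
have -> : j = Ordinal hjN by [].
rewrite coef_cp supp // inE /= vk /= -leqNgt; exact: hj.
Qed.

Lemma main_count : card_is (@is_polyfun F r f g)
  (\prod_(k : K0 | valid k) q ^ (size (gk k)).-1)%N.
Proof.
exists [seq Phi (cp c) | c <- enum (pffun_on (0 : F) Dset predT)]; split.
- rewrite map_inj_in_uniq ?enum_uniq // => c1 c2; rewrite !mem_enum => hc1 hc2 e.
  have ec := Phi_inj (fun k vk => @cp_red c1 k hc1 vk) (fun k vk => @cp_red c2 k hc2 vk) e.
  apply/ffunP => [[k j]].
  case: (boolP ((k, j) \in Dset)) => hD; last by rewrite !supp.
  move: (hD); rewrite inE => /andP[vk _].
  by rewrite -!coef_cp ec.
- move=> h; split.
    by case/mapP => c _ ->; apply: Phi_polyfun.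
  move=> /polyfun_Phi [c' hc' ->].
  pose cc : C := [ffun kj : K0 * 'I_N => if valid kj.1 then (c' kj.1)`_kj.2 else 0].
  have hcc : cc \in pffun_on 0 Dset predT.
    apply/pffun_onP; split => //; apply/subsetP => [[k j]]; rewrite !inE ffunE /=.
    case: (valid k) => /= nz; last by rewrite eqxx in nz.
    have h1 : (size (c' k) <= (size (gk k)).-1)%N.
      by rewrite -ltnS prednK ?size_poly_gt0 ?gk0 // hc'.
    apply: leq_trans h1; rewrite ltnNge; apply: contra nz => hs'.
    by apply/eqP; move/leq_sizeP: hs'; apply.
  apply/mapP; exists cc; first by rewrite mem_enum.
  apply: Phi_ext => k vk; apply/polyP => j.
  case: (ltnP j N) => hjN.
    by have -> : j = Ordinal hjN by []; rewrite coef_cp ffunE /= vk.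
  have hck : (size (c' k) <= N)%N.
    have h2 := leq_trans (hc' k) (gk_size k).
    by rewrite -subn1 leq_subRL ?add1n // ltnW.
  by rewrite coef_cp_ge //; move/leq_sizeP: hck; apply.
- rewrite size_map -cardE card_pffun_on.
  have -> : #|(predT : {pred F})| = q by [].
  rewrite -expn_sum; congr (_ ^ _)%N.
  rewrite -sum1_card (eq_bigl (fun kj : K0 * 'I_N => valid kj.1 && (kj.2 < (size (gk kj.1)).-1)%N)); last first.
    by move=> kj; rewrite inE.
  rewrite -(pair_big_dep valid (fun k (j : 'I_N) => (j < (size (gk k)).-1)%N) (fun _ _ => 1%N)) /=.
  apply: eq_bigr => k _.
  have hle : ((size (gk k)).-1 <= N)%N by rewrite -!subn1 leq_sub2r ?gk_size.
  rewrite -(big_ord_widen _ (fun _ => 1%N) hle) /=.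
  by rewrite sum_nat_const card_ord muln1.
Qed.

End Main.


Unset Implicit Arguments.

Theorem mainTheorem8 (F : finFieldType) (s : seq F) (r : nat)
  (f : 'I_r -> {poly F}) (g : {poly F}) :
  good_enum s ->
  (forall i, (1 < size (f i))%N) -> (1 < size g)%N ->
  card_is (@is_polyfun F r f g)
    (\prod_(k : {ffun 'I_r -> 'I_(\max_(i < r) mu s (f i) g)}
             | [forall i, (k i < mu s (f i) g)%N])
       #|F| ^ (size ((g %/ gcdp g (\prod_(i < r) fallprod s (k i)))%R)).-1)%N.
Proof.
move=> hs hf hg; exact: (main_count hs hf hg).
Qed.
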